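(* Let $V:\mathbb{R}\to\mathbb{R}$ be $1$-periodic and four times continuously differentiable, and $n\ge3$. Let $H_1$ be the $n\times n$ matrix $n^2$ times the periodic second-difference matrix (diagonal entries $2$, entries $-1$ at positions $(k,k\pm1)$ taken cyclically, i.e. including $(1,n)$ and $(n,1)$), let $H_2=\operatorname{diag}(V(0),V(1/n),\dots,V((n-1)/n))$, and let $D_1$ be the $n\times n$ matrix with $(D_1\vec v)_0=n(v_{n-1}-v_0)$ and $(D_1\vec v)_k=n(v_{k-1}-v_k)$ for $1\le k\le n-1$ (indices $0,\dots,n-1$). Then $H_1=D_1^\dagger D_1$, and there exist constants $\widetilde C_1,\widetilde C_2$ depending on $V$ but not on $n$ such that for every $\vec v\in\mathbb{C}^n$: $$\|[H_1,H_2]\vec v\|_\star\le\widetilde C_1(\|D_1\vec v\|_\star+\|\vec v\|_\star),\qquad \|[H_1,[H_1,H_2]]\vec v\|_\star\le\widetilde C_2(\|H_1\vec v\|_\star+\|\vec v\|_\star).$$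
   Context: The rescaled 2-norm is $\|\vec v\|_\star=n^{-1/2}\|\vec v\|$ where $\|\cdot\|$ is the Euclidean norm. $[A,B]=AB-BA$. This is the central finite-difference discretization with $n$ equidistant nodes $x_k=k/n$ on $[0,1]$ with periodic boundary conditions. *)

(* Defs.v *)
From mathcomp Require Import all_boot all_algebra all_classical all_reals all_analysis.
From mathcomp Require Import complex.
Import GRing.Theory Num.Theory numFieldNormedType.Exports.
Local Open Scope ring_scope.
Local Open Scope complex_scope.

Set Implicit Arguments.
Unset Strict Implicit.
Unset Printing Implicit Defensive.

Definition C4 (R : realType) (V : R -> R) : Prop :=
  (forall k : nat, (k < 4)%N -> forall x : R, derivable (derive1n k V) x 1)
  /\ continuous (derive1n 4 V : R -> R).

Definition one_periodic (R : realType) (V : R -> R) : Prop :=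
  forall x : R, V (x + 1) = V x.

Definition H1 (R : realType) (n : nat) : 'M[R[i]]_n :=
  \matrix_(i < n, j < n)
    ((n%:R ^+ 2) * (2%:R * (i == j :> nat)%:R
                    - ((j : nat) == (i.+1 %% n)%N)%:R
                    - ((j : nat) == ((i + n).-1 %% n)%N)%:R)).

Definition H2 (R : realType) (V : R -> R) (n : nat) : 'M[R[i]]_n :=
  \matrix_(i < n, j < n) ((i == j :> nat)%:R * (V ((i : nat)%:R / n%:R))%:C).

Definition D1 (R : realType) (n : nat) : 'M[R[i]]_n :=
  \matrix_(i < n, j < n)
    (n%:R * (((j : nat) == ((i + n).-1 %% n)%N)%:R - (i == j :> nat)%:R)).

Definition adjoint (R : realType) (n : nat) (A : 'M[R[i]]_n) : 'M[R[i]]_n :=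
  map_mx (@conjc R) A^T.

Definition comm (R : realType) (n : nat) (A B : 'M[R[i]]_n) : 'M[R[i]]_n :=
  A *m B - B *m A.

Definition normstar (R : realType) (n : nat) (v : 'cV[R[i]]_n) : R :=
  Num.sqrt (n%:R^-1 * \sum_(k < n) (complex.Re (v k 0) ^+ 2 + complex.Im (v k 0) ^+ 2)).

(* Main.v *)
Require Import Defs.
From mathcomp Require Import all_boot all_algebra all_classical all_reals all_analysis.
From mathcomp Require Import complex.
Import GRing.Theory Num.Theory numFieldNormedType.Exports.
Local Open Scope ring_scope.
Local Open Scope classical_set_scope.
Import order.Order.TTheory.
From mathcomp Require Import ring lra zify.
From mathcomp Require Import ring lra.
Section FD.
Variable R : realType.
Variable h : R.

Fixpoint fd (k : nat) (f : R -> R) : R -> R :=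
  match k with 0 => f | k'.+1 => fun y => fd k' f (y + h) - fd k' f y end.

Lemma shift_der (g : R -> R) x : derivable g (x + h) 1 ->
  derivable (g \o shift h) x 1 /\ (g \o shift h)^`() x = g^`() (x + h).
Proof.
move=> dg.
have ds : derivable (shift h : R -> R) x 1.
  by apply/derivable1_diffP; apply: differentiableD.
split.
  apply/derivable1_diffP; apply: differentiable_comp.
    by apply/derivable1_diffP.
  by apply/derivable1_diffP.
rewrite derive1_comp //.
rewrite derive1E [X in _ * X]derive1E. have := @is_derive_shift R x 1 h. move=> /@derive_val ->. by rewrite mulr1.
Qed.

Lemma fd_der k (f : R -> R) : (forall x, derivable f x 1) ->
  forall x, derivable (fd k f) x 1 /\ (fd k f)^`() x = fd k f^`() x.
Proof.
move=> df; elim: k => [|k IH] x /=; first by split.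
have -> : (fun y => fd k f (y + h) - fd k f y) = (fd k f \o shift h) - fd k f.
  by apply/funext.
have [d1 e1] := @shift_der (fd k f) x (proj1 (IH (x + h))).
have [d2 e2] := IH x.
split; first exact: derivableB.
rewrite derive1E deriveB // -!derive1E e1 e2.
by rewrite (proj2 (IH (x + h))).
Qed.
Lemma derive1n_succ (f : R -> R) j : f^`(j.+1) = (f^`())^`(j).
Proof. by rewrite /derive1n iterSr. Qed.

Lemma fd_bound k : forall (f : R -> R) (a b M : R), 0 <= h ->
  (forall j, (j < k)%N -> forall x, derivable (f^`(j)) x 1) ->
  (forall x, a <= x <= b -> `|f^`(k) x| <= M) ->
  forall y, a <= y -> y + k%:R * h <= b -> `|fd k f y| <= M * h ^+ k.
Proof.
elim: k => [|k IH] f a b M h0 df bM y ay yb.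
  rewrite /= expr0 mulr1; apply: bM; rewrite ay /=.
  by move: yb; rewrite mul0r addr0.
have df0 : forall x, derivable f x 1 by move=> x; have := df 0%N isT x.
have dg := @fd_der k f df0.
rewrite /=.
have yyh : y <= y + h by rewrite lerDl.
have [c cin ceq] := @MVT_segment R (fd k f) (fd k f)^`() y (y + h) yyh
   (fun x _ => eq_ind_r _ (derivableP (proj1 (dg x))) (derive1E _ _)) 
   (derivable_within_continuous (fun x _ => proj1 (dg x))).
rewrite ceq (proj2 (dg c)) addrAC subrr add0r normrM (ger0_norm h0) exprSr mulrA.
apply: ler_wpM2r => //.
move: cin; rewrite in_itv /= => /andP [yc ch].
apply: (IH _ a b) => //.
- by move=> j jk x; rewrite -derive1n_succ; apply: df.
- by move=> x xab; rewrite -derive1n_succ; apply: bM.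
- exact: le_trans yc.
- apply: le_trans yb; rewrite -addn1 natrD mulrDl mul1r; lra.
Qed.
End FD.
Section VB.
Variable R : realType.

Lemma bound_one (f : R -> R) : continuous f ->
  exists M, 0 <= M /\ forall x, -1 <= x <= 2 -> `|f x| <= M.
Proof.
move=> cf.
have cnf : continuous (fun x => `|f x|).
  by move=> x; apply: (continuous_comp (cf x) (@norm_continuous _ _ _)).
have e := @EVT_max R (fun x => `|f x|) (-1) 2.
have [c _ hc] := e ltac:(lra) ltac:(apply: continuous_subspaceT; exact: cnf).
exists `|f c|; split => // x xb; apply: hc; by rewrite in_itv /=.
Qed.

Lemma C4_bounds (V : R -> R) : C4 V ->
  exists M, 0 <= M /\ forall k, (k <= 4)%N -> forall x, -1 <= x <= 2 -> `|V^`(k) x| <= M.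
Proof.
move=> [dV cV].
have ck : forall k, (k <= 4)%N -> continuous (V^`(k)).
  move=> k; rewrite leq_eqVlt => /orP [/eqP -> //|kl] x.
  by apply: differentiable_continuous; apply/derivable1_diffP; apply: dV.
have [M0 [M00 H0]] := @bound_one (V^`(0)) (ck 0%N isT).
have [M1 [M10 H1]] := @bound_one (V^`(1)) (ck 1%N isT).
have [M2 [M20 H2]] := @bound_one (V^`(2)) (ck 2%N isT).
have [M3 [M30 H3]] := @bound_one (V^`(3)) (ck 3%N isT).
have [M4 [M40 H4]] := @bound_one (V^`(4)) (ck 4%N isT).
exists (M0 + M1 + M2 + M3 + M4); split; first lra.
move=> [|[|[|[|[|k]]]]] // _ x xb.
- have := H0 x xb; lra.
- have := H1 x xb; lra.
- have := H2 x xb; lra.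
- have := H3 x xb; lra.
- have := H4 x xb; lra.
Qed.

Lemma V_diffs (V : R -> R) (M h x : R) : C4 V -> 0 <= h ->
  (forall k, (k <= 4)%N -> forall x, -1 <= x <= 2 -> `|V^`(k) x| <= M) ->
  -1 <= x - h - h -> x + h + h <= 2 ->
  [/\ `|V (x + h) - V x| <= M * h,
      `|V (x + h) - 2 * V x + V (x - h)| <= M * h ^+ 2,
      `|V (x + h + h) - 3 * V (x + h) + 3 * V x - V (x - h)| <= M * h ^+ 3 &
      `|V (x + h + h) - 4 * V (x + h) + 6 * V x - 4 * V (x - h) + V (x - h - h)| <= M * h ^+ 4].
Proof.
move=> [dV _] h0 bM xl xr.
have dj : forall k, (k <= 4)%N -> forall j, (j < k)%N -> forall x, derivable (V^`(j)) x 1.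
  move=> k k4 j jk; apply: dV; exact: leq_trans jk k4.
have bk : forall k, (k <= 4)%N -> forall x, -1 <= x <= 2 -> `|V^`(k) x| <= M by [].
split.
- have := @fd_bound R h 1 V (-1) 2 M h0 (dj 1%N isT) (bk 1%N isT) x ltac:(lra) ltac:(lra).
  by rewrite /= expr1.
- have := @fd_bound R h 2 V (-1) 2 M h0 (dj 2%N isT) (bk 2%N isT) (x - h) ltac:(lra) ltac:(lra).
  rewrite /= !subrK.
  by congr (_ <= _); congr (`| _ |); ring.
- have := @fd_bound R h 3 V (-1) 2 M h0 (dj 3%N isT) (bk 3%N isT) (x - h) ltac:(lra) ltac:(lra).
  rewrite /= !subrK.
  by congr (_ <= _); congr (`| _ |); ring.
- have := @fd_bound R h 4 V (-1) 2 M h0 (dj 4%N isT) (bk 4%N isT) (x - h - h) ltac:(lra) ltac:(lra).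
  rewrite /= !subrK.
  by congr (_ <= _); congr (`| _ |); ring.
Qed.
End VB.
Section Mx.
Local Open Scope complex_scope.
Variable R : realType.
Variable n : nat.
Implicit Types (i j k : 'I_n).

Lemma sum_delta (a : 'I_n) (F : 'I_n -> R[i]) : \sum_j (j == a)%:R * F j = F a.
Proof.
rewrite (bigD1 a) //= eqxx mul1r big1 ?addr0 // => j /negbTE ->.
by rewrite mul0r.
Qed.

Lemma pred_eq i k : (i == ord_pred k) = (k == ordS i).
Proof.
by apply/eqP/eqP => [->|->]; [rewrite ord_predK | rewrite ordSK].
Qed.

Lemma H1E i j : H1 R n i j =
  n%:R^+2 * (2%:R * (i == j)%:R - (j == ordS i)%:R - (j == ord_pred i)%:R).
Proof. by rewrite mxE. Qed.

Lemma D1E i j : D1 R n i j = n%:R * ((j == ord_pred i)%:R - (i == j)%:R).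
Proof. by rewrite mxE. Qed.

Lemma H1v (x : 'cV[R[i]]_n) i : (H1 R n *m x) i 0 =
  n%:R^+2 * (2%:R * x i 0 - x (ordS i) 0 - x (ord_pred i) 0).
Proof.
rewrite mxE.
transitivity (\sum_j (n%:R^+2 * 2%:R * ((j == i)%:R * x j 0)
   - n%:R^+2 * ((j == ordS i)%:R * x j 0) - n%:R^+2 * ((j == ord_pred i)%:R * x j 0))).
  by apply: eq_bigr => j _; rewrite H1E [i == j]eq_sym; ring.
by rewrite !sumrB -!mulr_sumr !sum_delta; ring.
Qed.

Lemma D1v (x : 'cV[R[i]]_n) i : (D1 R n *m x) i 0 =
  n%:R * (x (ord_pred i) 0 - x i 0).
Proof.
rewrite mxE.
transitivity (\sum_j (n%:R * ((j == ord_pred i)%:R * x j 0) - n%:R * ((j == i)%:R * x j 0))).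
  by apply: eq_bigr => j _; rewrite D1E [i == j]eq_sym; ring.
by rewrite !sumrB -!mulr_sumr !sum_delta; ring.
Qed.

Lemma H2v (V : R -> R) (x : 'cV[R[i]]_n) i : (H2 V n *m x) i 0 =
  (V ((i : nat)%:R / n%:R))%:C * x i 0.
Proof.
rewrite mxE.
transitivity (\sum_j ((V ((i : nat)%:R / n%:R))%:C * ((j == i)%:R * x j 0))).
  by apply: eq_bigr => j _; rewrite mxE val_eqE [i == j]eq_sym; ring.
by rewrite -mulr_sumr sum_delta.
Qed.

Lemma H1_DD : H1 R n = adjoint (D1 R n) *m D1 R n.
Proof.
apply/matrixP => i j; rewrite !mxE.
transitivity (\sum_k ((n%:R^+2 : R[i]) * ((k == ordS i)%:R * (k == ordS j)%:R
   - (k == ordS i)%:R * (k == j)%:R - (k == i)%:R * (k == ordS j)%:R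
   + (k == i)%:R * (k == j)%:R))); last first.
  apply: eq_bigr => k _; rewrite !mxE.
  have e : forall a : 'I_n, (a == ((k + n).-1 %% n)%N :> nat) = (a == ord_pred k) by [].
  rewrite !e !val_eqE !pred_eq rmorphM rmorphB !rmorph_nat; ring.
rewrite -mulr_sumr big_split /= !sumrB !sum_delta.
rewrite (inj_eq (@ordS_inj _)) (eq_sym (ordS i) j) (eq_sym i (ordS j)) -pred_eq.
have e1 : ((j:nat) == (i.+1 %% n)%N) = (j == ordS i) by [].
have e2 : ((j:nat) == ((i + n).-1 %% n)%N) = (j == ord_pred i) by [].
rewrite e1 e2 val_eqE pred_eq [ordS j == i]eq_sym -pred_eq; ring.
Qed.
End Mx.
Section Per.
Variable R : realType.
Variable n : nat.
Hypothesis n0 : (0 < n)%N.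
Variable V : R -> R.
Hypothesis per : one_periodic V.

Lemma nR0 : (n%:R : R) != 0.
Proof. by rewrite pnatr_eq0 -lt0n. Qed.

Lemma Vs (i : 'I_n) t : V ((ordS i : nat)%:R / n%:R + t) = V ((i : nat)%:R / n%:R + (n%:R^-1 + t)).
Proof.
rewrite /=; case: (ltnP i.+1 n) => h.
  by rewrite modn_small // -addn1 natrD mulrDl mul1r addrA.
have e : i.+1 = n by have := ltn_ord i; lia.
rewrite e modnn mul0r add0r addrA.
have -> : (i : nat)%:R / n%:R + n%:R^-1 = 1 :> R.
  rewrite -[X in _ + X]mul1r -mulrDl -[(1 : R)]/(1%:R) -natrD addn1 e.
  by rewrite divff // nR0.
by rewrite addrC per.
Qed.

Lemma Vp (i : 'I_n) t : V ((ord_pred i : nat)%:R / n%:R + t) = V ((i : nat)%:R / n%:R + (t - n%:R^-1)).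
Proof.
rewrite /=; case: (posnP i) => h.
  rewrite h add0n modn_small; last by rewrite prednK // leqnn.
  rewrite mul0r add0r -[in RHS]per -subn1 natrB //; congr V.
  by field; rewrite nR0.
have e : (i + n).-1 = (i.-1 + n)%N by lia.
rewrite e modnDr modn_small; last by have := ltn_ord i; lia.
have e2 : (i : nat) = (i.-1 + 1)%N by lia.
rewrite [in RHS]e2 natrD mulrDl mul1r; congr V; ring.
Qed.

Let x (i : 'I_n) := (i : nat)%:R / n%:R :> R.
Let h := n%:R^-1 :> R.

Lemma VS1 i : V ((ordS i : nat)%:R / n%:R) = V (x i + h).
Proof. by rewrite -[X in V X]addr0 Vs addr0. Qed.
Lemma VS2 i : V ((ordS (ordS i) : nat)%:R / n%:R) = V (x i + h + h).
Proof. by rewrite -[X in V X]addr0 Vs Vs addr0 addrA. Qed.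
Lemma VP1 i : V ((ord_pred i : nat)%:R / n%:R) = V (x i - h).
Proof. by rewrite -[X in V X]addr0 Vp add0r. Qed.
Lemma VP2 i : V ((ord_pred (ord_pred i) : nat)%:R / n%:R) = V (x i - h - h).
Proof. by rewrite -[X in V X]addr0 Vp Vp add0r addrA. Qed.
End Per.
Section Comm.
Local Open Scope complex_scope.
Variable R : realType.
Variable n : nat.
Variable V : R -> R.
Implicit Types (i j k : 'I_n).
Local Notation Vc j := ((V ((j : nat)%:R / n%:R))%:C : R[i]).
Local Notation s := (@ordS n).
Local Notation p := (@ord_pred n).

Lemma entryB (A B : 'cV[R[i]]_n) i : (A - B) i 0 = A i 0 - B i 0.
Proof. by rewrite !mxE. Qed.

Lemma Kv (x : 'cV[R[i]]_n) i : (comm (H1 R n) (H2 V n) *m x) i 0 =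
  n%:R^+2 * ((Vc i - Vc (s i)) * x (s i) 0 + (Vc i - Vc (p i)) * x (p i) 0).
Proof.
rewrite /comm mulmxBl -!mulmxA entryB H1v !H2v H1v; ring.
Qed.

Lemma KKv (x : 'cV[R[i]]_n) i : (comm (H1 R n) (comm (H1 R n) (H2 V n)) *m x) i 0 =
  let N := (n%:R : R[i]) in
  let V0 := Vc i in let V1 := Vc (s i) in let V2 := Vc (s (s i)) in
  let Vm1 := Vc (p i) in let Vm2 := Vc (p (p i)) in
  let x0 := x i 0 in let x1 := x (s i) 0 in let x2 := x (s (s i)) 0 in
  let xm1 := x (p i) 0 in let xm2 := x (p (p i)) 0 in
  let c0 := N^+2 * (V1 - 2%:R * V0 + Vm1) in
  let g := N^+3 * (V2 - 3%:R * V1 + 3%:R * V0 - Vm1) in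
  let q := N^+4 * (V2 - 4%:R * V1 + 6%:R * V0 - 4%:R * Vm1 + Vm2) in
  let h0 := N^+2 * (2%:R * x0 - x1 - xm1) in
  let h1 := N^+2 * (2%:R * x1 - x2 - x0) in
  let hm1 := N^+2 * (2%:R * xm1 - x0 - xm2) in
  let d2 := N * (x1 - x2) in let d1 := N * (x0 - x1) in
  let d0 := N * (xm1 - x0) in let dm1 := N * (xm2 - xm1) in
  - c0 * (h1 + 2%:R * h0 + hm1) - g * (d2 + d1 + d0 + dm1) + q * xm2.
Proof.
rewrite {1}/comm mulmxBl -!mulmxA entryB H1v !Kv !H1v ordSK ord_predK /=; ring.
Qed.
End Comm.
Section Norms.
Local Open Scope complex_scope.
Variable R : realType.
Local Notation nc := (@Normc.normc R).

Lemma nc_ge0 (z : R[i]) : 0 <= nc z.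
Proof. by case: z => a b; rewrite /Normc.normc sqrtr_ge0. Qed.

Lemma normE (z : R[i]) : `|z| = (nc z)%:C.
Proof. by case: z => a b; rewrite normc_def. Qed.

Lemma nc_sq (z : R[i]) : nc z ^+ 2 = complex.Re z ^+ 2 + complex.Im z ^+ 2.
Proof. by case: z => a b; rewrite /Normc.normc /= sqr_sqrtr // addr_ge0 // sqr_ge0. Qed.

Lemma nc_tri (a b : R[i]) : nc (a + b) <= nc a + nc b.
Proof. exact: le_normcD. Qed.

Lemma nc_opp (a : R[i]) : nc (- a) = nc a.
Proof. exact: normcN. Qed.

Lemma nc_sub (a b : R[i]) : nc (a - b) <= nc a + nc b.
Proof. by rewrite -(nc_opp b); apply: nc_tri. Qed.

Lemma nc_mul (a b : R[i]) : nc (a * b) = nc a * nc b.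
Proof. exact: Normc.normcM. Qed.

Lemma nc_real (r : R) : nc (r%:C) = `|r|.
Proof. by rewrite /Normc.normc /= expr0n /= addr0 sqrtr_sqr. Qed.

Lemma nc_nat (m : nat) : nc (m%:R : R[i]) = m%:R.
Proof. by rewrite -(rmorph_nat (real_complex R)) nc_real normr_nat. Qed.

Lemma nc_conj (a : R[i]) : nc (a^*) = nc a.
Proof. by case: a => x y; rewrite /Normc.normc /= sqrrN. Qed.

Lemma sum_const_seq (s : seq R) (c : R) : \sum_(y <- s) c = c * (size s)%:R.
Proof.
elim: s => [|y s IH]; first by rewrite big_nil mulr0.
by rewrite big_cons IH /= -addn1 natrD; ring.
Qed.

Lemma sq_sum (s : seq R) :
  (\sum_(x <- s) x) ^+ 2 <= (size s)%:R * \sum_(x <- s) x ^+ 2.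
Proof.
rewrite expr2 mulr_suml.
apply: (@le_trans _ _ (\sum_(x <- s) \sum_(y <- s) ((x ^+ 2 + y ^+ 2) / 2))).
  apply: ler_sum => x _; rewrite mulr_sumr; apply: ler_sum => y _.
  have := sqr_ge0 (x - y); nra.
rewrite le_eqVlt; apply/orP; left; apply/eqP.
transitivity (\sum_(x <- s) (x ^+ 2 * (size s)%:R / 2 + (\sum_(y <- s) y ^+ 2) / 2)).
  apply: eq_bigr => x _.
  rewrite (eq_bigr (fun y => x ^+ 2 / 2 + y ^+ 2 / 2)); last by move=> y _; ring.
  by rewrite big_split /= sum_const_seq -mulr_suml mulrAC.
by rewrite big_split /= sum_const_seq -!mulr_suml; field.
Qed.

Lemma sqrtD_le (x y : R) : 0 <= x -> 0 <= y ->
  Num.sqrt (x + y) <= Num.sqrt x + Num.sqrt y.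
Proof.
move=> x0 y0.
rewrite -(ler_pXn2r (n := 2)) ?nnegrE ?addr_ge0 ?sqrtr_ge0 //.
rewrite sqr_sqrtr ?addr_ge0 // sqrrD !sqr_sqrtr //.
have := mulr_ge0 (sqrtr_ge0 x) (sqrtr_ge0 y); lra.
Qed.

Lemma scale_bound (n : nat) k (D M : R) : (0 < n)%N ->
  `|D| <= M * (n%:R^-1) ^+ k -> `|n%:R ^+ k * D| <= M.
Proof.
move=> n0 hD.
rewrite normrM normrX normr_nat.
have np : (0 : R) < n%:R ^+ k by rewrite exprn_gt0 // ltr0n.
apply: le_trans (ler_wpM2l (ltW np) hD) _.
rewrite mulrCA -exprMn mulfV ?expr1n ?mulr1 //.
by rewrite pnatr_eq0 -lt0n.
Qed.

Lemma lift_bound (r : R) (z : R[i]) (M : R) : r%:C = z -> `|r| <= M -> nc z <= M.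
Proof. by move=> <-; rewrite nc_real. Qed.
End Norms.
Section Main.
Local Open Scope complex_scope.
Variable R : realType.
Variable V : R -> R.
Hypothesis per : one_periodic V.
Hypothesis c4 : C4 V.
Variable M : R.
Hypothesis M0 : 0 <= M.
Hypothesis bM : forall k, (k <= 4)%N -> forall x, -1 <= x <= 2 -> `|V^`(k) x| <= M.
Variable n : nat.
Hypothesis n3 : (3 <= n)%N.
Local Notation nc := (@Normc.normc R).
Local Notation s := (@ordS n).
Local Notation p := (@ord_pred n).
Local Notation rc := (rmorph_nat (real_complex R)).

Lemma n0 : (0 < n)%N. Proof. by apply: leq_trans n3. Qed.

Lemma diffs (i : 'I_n) :
  let x := (i : nat)%:R / n%:R in let h := n%:R^-1 in
  [/\ `|V (x + h) - V x| <= M * h,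
      `|V (x + h) - 2 * V x + V (x - h)| <= M * h ^+ 2,
      `|V (x + h + h) - 3 * V (x + h) + 3 * V x - V (x - h)| <= M * h ^+ 3 &
      `|V (x + h + h) - 4 * V (x + h) + 6 * V x - 4 * V (x - h) + V (x - h - h)| <= M * h ^+ 4].
Proof.
move=> x h.
have nR : (0 : R) < n%:R by rewrite ltr0n n0.
have h0 : 0 < h by rewrite invr_gt0.
have x0 : 0 <= x by rewrite divr_ge0.
have xh : x + h <= 1.
  have -> : x + h = (i.+1)%:R / n%:R by rewrite /x /h -addn1 natrD mulrDl mul1r.
  by rewrite ler_pdivrMr // mul1r ler_nat.
have hn : h * n%:R = 1 by rewrite mulVf // gt_eqF.
have n3R : (3 : R) <= n%:R by rewrite (ler_nat R 3 n).
have h3 : 3 * h <= 1 by nra.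
apply: V_diffs => //; [exact: ltW | lra | lra].
Qed.

Lemma pt1 (v : 'cV[R[i]]_n) i :
  nc ((comm (H1 R n) (H2 V n) *m v) i 0) <=
  M * (nc ((D1 R n *m v) (s i) 0) + nc ((D1 R n *m v) i 0) + nc (v (p i) 0)).
Proof.
rewrite Kv !D1v ordSK (@VS1 _ _ n0 _ per) (@VP1 _ _ n0 _ per).
have [B1 B2 _ _] := diffs i.
set x := (i : nat)%:R / n%:R in B1 B2 *.
set h := n%:R^-1 in B1 B2 *.
set N := (n%:R : R[i]).
set x0 := v i 0; set x1 := v (s i) 0; set xm1 := v (p i) 0.
set a := N * ((V x)%:C - (V (x + h))%:C).
set e := N ^+ 2 * (2%:R * (V x)%:C - (V (x + h))%:C - (V (x - h))%:C).
have -> : N ^+ 2 * (((V x)%:C - (V (x + h))%:C) * x1 + ((V x)%:C - (V (x - h))%:C) * xm1)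
   = - a * (N * (x0 - x1) + N * (xm1 - x0)) + e * xm1.
  by rewrite /a /e; ring.
have ba : nc a <= M.
  apply: (@lift_bound _ (n%:R ^+ 1 * (V x - V (x + h)))).
    by rewrite rmorphM rmorphXn rc rmorphB.
  by apply: scale_bound; rewrite ?n0 // distrC.
have be : nc e <= M.
  apply: (@lift_bound _ (n%:R ^+ 2 * - (V (x + h) - 2 * V x + V (x - h)))).
    rewrite rmorphM rmorphXn rc rmorphN !rmorphD rmorphN rmorphM /e.
    rewrite (rc 2); ring.
  by apply: scale_bound; rewrite ?n0 // normrN.
have t1 := @nc_tri _ (- a * (N * (x0 - x1) + N * (xm1 - x0))) (e * xm1).
have t2 := @nc_tri _ (N * (x0 - x1)) (N * (xm1 - x0)).
have m1 : nc (- a * (N * (x0 - x1) + N * (xm1 - x0))) = nc a * nc (N * (x0 - x1) + N * (xm1 - x0)).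
  by rewrite nc_mul nc_opp.
have m2 : nc (e * xm1) = nc e * nc xm1 by rewrite nc_mul.
rewrite m1 m2 in t1.
have g1 := @nc_ge0 _ (N * (x0 - x1) + N * (xm1 - x0)).
have g2 := @nc_ge0 _ xm1.
have p1 := ler_wpM2r g1 ba.
have p2 := ler_wpM2r g2 be.
have g3 := @nc_ge0 _ (N * (x0 - x1)).
have g4 := @nc_ge0 _ (N * (xm1 - x0)).
have := ler_wpM2l M0 t2.
move=> p3; lra.
Qed.

Lemma comb (c0 g q h1 h0 hm1 d2 d1 d0 dm1 y : R[i]) :
  nc c0 <= M -> nc g <= M -> nc q <= M ->
  nc (- c0 * (h1 + 2%:R * h0 + hm1) - g * (d2 + d1 + d0 + dm1) + q * y) <=
  M * (nc h1 + 2 * nc h0 + nc hm1 + nc d2 + nc d1 + nc d0 + nc dm1 + nc y).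
Proof.
move=> bc bg bq.
set Hs := h1 + 2%:R * h0 + hm1.
set Ds := d2 + d1 + d0 + dm1.
have T1 := @nc_tri _ (- c0 * Hs - g * Ds) (q * y).
have T2 := @nc_sub _ (- c0 * Hs) (g * Ds).
have m1 : nc (- c0 * Hs) = nc c0 * nc Hs by rewrite nc_mul nc_opp.
have m2 : nc (g * Ds) = nc g * nc Ds by rewrite nc_mul.
have m3 : nc (q * y) = nc q * nc y by rewrite nc_mul.
have H1 := @nc_tri _ (h1 + 2%:R * h0) hm1.
have H2 := @nc_tri _ h1 (2%:R * h0).
have m4 : nc (2%:R * h0) = 2 * nc h0 by rewrite nc_mul nc_nat.
have D1 := @nc_tri _ (d2 + d1 + d0) dm1.
have D2 := @nc_tri _ (d2 + d1) d0.
have D3 := @nc_tri _ d2 d1.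
have p1 := ler_wpM2r (@nc_ge0 _ Hs) bc.
have p2 := ler_wpM2r (@nc_ge0 _ Ds) bg.
have p3 := ler_wpM2r (@nc_ge0 _ y) bq.
have eH : nc Hs <= nc h1 + 2 * nc h0 + nc hm1 by rewrite /Hs; lra.
have eD : nc Ds <= nc d2 + nc d1 + nc d0 + nc dm1 by rewrite /Ds; lra.
have q1 := ler_wpM2l M0 eH.
have q2 := ler_wpM2l M0 eD.
rewrite m1 m2 m3 in T1 T2.
lra.
Qed.

Lemma pt2 (v : 'cV[R[i]]_n) i :
  nc ((comm (H1 R n) (comm (H1 R n) (H2 V n)) *m v) i 0) <=
  M * (nc ((H1 R n *m v) (s i) 0) + 2 * nc ((H1 R n *m v) i 0) + nc ((H1 R n *m v) (p i) 0)
     + nc ((D1 R n *m v) (s (s i)) 0) + nc ((D1 R n *m v) (s i) 0)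
     + nc ((D1 R n *m v) i 0) + nc ((D1 R n *m v) (p i) 0) + nc (v (p (p i)) 0)).
Proof.
rewrite KKv; cbv zeta.
rewrite !H1v !D1v !ordSK !ord_predK.
rewrite (@VS2 _ _ n0 _ per) (@VP2 _ _ n0 _ per) (@VS1 _ _ n0 _ per) (@VP1 _ _ n0 _ per).
have [_ B2 B3 B4] := diffs i.
set x := (i : nat)%:R / n%:R in B2 B3 B4 *.
set h := n%:R^-1 in B2 B3 B4 *.
apply: comb.
- apply: (@lift_bound _ (n%:R ^+ 2 * (V (x + h) - 2 * V x + V (x - h)))).
    by rewrite !(rmorphM, rmorphXn, rmorphD, rmorphN, rc).
  by apply: scale_bound; rewrite ?n0.
- apply: (@lift_bound _ (n%:R ^+ 3 * (V (x + h + h) - 3 * V (x + h) + 3 * V x - V (x - h)))).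
    by rewrite !(rmorphM, rmorphXn, rmorphD, rmorphN, rc).
  by apply: scale_bound; rewrite ?n0.
- apply: (@lift_bound _ (n%:R ^+ 4 * (V (x + h + h) - 4 * V (x + h) + 6 * V x - 4 * V (x - h) + V (x - h - h)))).
    by rewrite !(rmorphM, rmorphXn, rmorphD, rmorphN, rc).
  by apply: scale_bound; rewrite ?n0.
Qed.
End Main.
Section Fin.
Local Open Scope complex_scope.
Variable R : realType.
Local Notation nc := (@Normc.normc R).

Definition SS n (v : 'cV[R[i]]_n) := \sum_k nc (v k 0) ^+ 2.
Arguments SS {n}.

Lemma SS_ge0 {n} (v : 'cV[R[i]]_n) : 0 <= SS v.
Proof. by apply: sumr_ge0 => k _; apply: sqr_ge0. Qed.

Lemma sum_S n (F : 'I_n -> R) : \sum_i F (ordS i) = \sum_i F i.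
Proof. by rewrite [RHS](reindex_inj (@ordS_inj n)). Qed.

Lemma sum_P n (F : 'I_n -> R) : \sum_i F (ord_pred i) = \sum_i F i.
Proof. by rewrite [RHS](reindex_inj (@ord_pred_inj n)). Qed.

Lemma ns_eq n (v : 'cV[R[i]]_n) : normstar v = Num.sqrt (n%:R^-1 * SS v).
Proof. by rewrite /normstar /SS; congr (Num.sqrt (_ * _)); apply: eq_bigr => k _; rewrite nc_sq. Qed.

Lemma ns_bound n (w a b : 'cV[R[i]]_n) (K : R) : 0 <= K ->
  SS w <= K * (SS a + SS b) -> normstar w <= Num.sqrt K * (normstar a + normstar b).
Proof.
move=> K0 hw; rewrite !ns_eq.
have ni : (0 : R) <= n%:R^-1 by rewrite invr_ge0.
have ha := SS_ge0 (n:=n) a; have hb := SS_ge0 (n:=n) b.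
apply: (@le_trans _ _ (Num.sqrt (K * (n%:R^-1 * SS a + n%:R^-1 * SS b)))).
  apply: ler_wsqrtr.
  rewrite -mulrDr mulrCA; exact: ler_wpM2l.
rewrite sqrtrM //; apply: ler_wpM2l; first exact: sqrtr_ge0.
by apply: sqrtD_le; apply: mulr_ge0.
Qed.

Lemma sq_le (a b : R) : 0 <= a -> a <= b -> a ^+ 2 <= b ^+ 2.
Proof. by move=> a0 ab; rewrite ler_pXn2r // nnegrE (le_trans a0 ab). Qed.

Lemma nc_sum n (F : 'I_n -> R[i]) : nc (\sum_k F k) <= \sum_k nc (F k).
Proof.
elim/big_rec2: _ => [|k y1 y2 _ IH].
  by rewrite (_ : 0 = (0:R)%:C) // nc_real normr0.
by apply: le_trans (@nc_tri _ _ _) _; rewrite lerD2l.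
Qed.

Lemma ncsqC (z : R[i]) : ((nc z) ^+ 2)%:C = z^* * z.
Proof.
rewrite nc_sq; case: z => a b /=.
apply/eqP; rewrite eq_complex /=; apply/andP; split; apply/eqP; ring.
Qed.

Lemma D_bound n (v : 'cV[R[i]]_n) : (3 <= n)%N ->
  SS (D1 R n *m v) <= (SS v + SS (H1 R n *m v)) / 2.
Proof.
move=> n3.
set d := D1 R n *m v.
have key : (SS d)%:C = \sum_k (v k 0)^* * (H1 R n *m v) k 0.
  rewrite /SS rmorph_sum.
  have e : forall (A : 'cV[R[i]]_n) k, (map_mx conjc A^T) 0 k = (A k 0)^* by move=> A k; rewrite !mxE.
  transitivity ((map_mx conjc d^T *m d) 0 0).
    rewrite [RHS]mxE; apply: eq_bigr => k _.
    by rewrite e; apply: ncsqC.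
  rewrite /d trmx_mul map_mxM -mulmxA [X in map_mx _ v^T *m X]mulmxA.
  have -> : map_mx conjc (D1 R n)^T *m D1 R n = H1 R n by rewrite H1_DD.
  by rewrite mxE; apply: eq_bigr => k _; rewrite e.
have hS : SS d = nc ((SS d)%:C) by rewrite nc_real ger0_norm // SS_ge0.
rewrite hS key.
have HH := @nc_sum n (fun k => (v k 0)^* * (H1 R n *m v) k 0).
suff HS : \sum_k nc ((v k 0)^* * (H1 R n *m v) k 0) <= (SS v + SS (H1 R n *m v)) / 2.
  exact: le_trans HH HS.
rewrite [X in _ <= X](_ : _ = \sum_k (nc (v k 0) ^+ 2 / 2 + nc ((H1 R n *m v) k 0) ^+ 2 / 2)); last first.
  by rewrite big_split /= -!mulr_suml mulrDl.
apply: ler_sum => k _.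
rewrite nc_mul nc_conj.
have := sqr_ge0 (nc (v k 0) - nc ((H1 R n *m v) k 0)); nra.
Qed.
End Fin.
Theorem lemma8 (R : realType) (V : R -> R) :
  one_periodic V -> C4 V ->
  (forall n : nat, (3 <= n)%N -> H1 R n = adjoint (D1 R n) *m D1 R n) /\
  exists C1 C2 : R,
    forall n : nat, (3 <= n)%N -> forall v : 'cV[R[i]]_n,
      normstar (comm (H1 R n) (H2 V n) *m v)
        <= C1 * (normstar (D1 R n *m v) + normstar v) /\
      normstar (comm (H1 R n) (comm (H1 R n) (H2 V n)) *m v)
        <= C2 * (normstar (H1 R n *m v) + normstar v).
Proof.
move=> per c4; split; first by move=> n _; exact: H1_DD.
have [M [M0 bM]] := @C4_bounds R V c4.
have M2 : 0 <= M ^+ 2 by apply: sqr_ge0.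
exists (Num.sqrt (6 * M ^+ 2)), (Num.sqrt (54 * M ^+ 2)).
move=> n n3 v.
set d := D1 R n *m v.
set hv := H1 R n *m v.
have Dd := @D_bound R n v n3.
have Sv := @SS_ge0 R n v; have Sd := @SS_ge0 R n d; have Sh := @SS_ge0 R n hv.
split.
- apply: (@ns_bound R); first lra.
  set w := comm (H1 R n) (H2 V n) *m v.
  have E1 : SS R n w <= \sum_i (3 * M ^+ 2) * (Normc.normc (d (ordS i) 0) ^+ 2 + Normc.normc (d i 0) ^+ 2 + Normc.normc (v (ord_pred i) 0) ^+ 2).
    rewrite /SS; apply: ler_sum => i _.
    have hp := @pt1 R V per c4 M M0 bM n n3 v i.
    have hq := @sq_le R _ _ (@nc_ge0 _ _) hp.
    have hs := @sq_sum R [:: Normc.normc (d (ordS i) 0); Normc.normc (d i 0); Normc.normc (v (ord_pred i) 0)].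
    rewrite !big_cons big_nil /= !addr0 in hs.
    rewrite exprMn in hq.
    have hA := ler_wpM2l M2 hs.
    move: hq hA; rewrite big_nil addr0 /d; lra.
  have E2 : \sum_i (3 * M ^+ 2) * (Normc.normc (d (ordS i) 0) ^+ 2 + Normc.normc (d i 0) ^+ 2 + Normc.normc (v (ord_pred i) 0) ^+ 2)
      = 3 * M ^+ 2 * (SS R n d + SS R n d + SS R n v).
    rewrite -mulr_sumr !big_split /=.
    by rewrite (@sum_S R n (fun j => Normc.normc (d j 0) ^+ 2)) (@sum_P R n (fun j => Normc.normc (v j 0) ^+ 2)).
  have := mulr_ge0 M2 Sv.
  lra.
- apply: (@ns_bound R); first lra.
  set w := comm (H1 R n) (comm (H1 R n) (H2 V n)) *m v.
  pose T i := Normc.normc (hv (ordS i) 0) ^+ 2 + Normc.normc (hv i 0) ^+ 2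
     + Normc.normc (hv i 0) ^+ 2 + Normc.normc (hv (ord_pred i) 0) ^+ 2
     + Normc.normc (d (ordS (ordS i)) 0) ^+ 2 + Normc.normc (d (ordS i) 0) ^+ 2
     + Normc.normc (d i 0) ^+ 2 + Normc.normc (d (ord_pred i) 0) ^+ 2
     + Normc.normc (v (ord_pred (ord_pred i)) 0) ^+ 2.
  have E1 : SS R n w <= \sum_i (9 * M ^+ 2) * T i.
    rewrite /SS; apply: ler_sum => i _.
    have hp := @pt2 R V per c4 M M0 bM n n3 v i.
    have hq := @sq_le R _ _ (@nc_ge0 _ _) hp.
    have hs := @sq_sum R [:: Normc.normc (hv (ordS i) 0); Normc.normc (hv i 0);
      Normc.normc (hv i 0); Normc.normc (hv (ord_pred i) 0);
      Normc.normc (d (ordS (ordS i)) 0); Normc.normc (d (ordS i) 0);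
      Normc.normc (d i 0); Normc.normc (d (ord_pred i) 0);
      Normc.normc (v (ord_pred (ord_pred i)) 0)].
    rewrite !big_cons /= in hs.
    rewrite exprMn in hq.
    have hA := ler_wpM2l M2 hs.
    have z : \sum_(j <- [::]) (j : R) ^+ 2 = 0 by rewrite big_nil.
    have z2 : \sum_(j <- [::]) (j : R) = 0 by rewrite big_nil.
    move: hq hA; rewrite z z2 /T /d /hv /w => hq hA.
    apply: le_trans hq _; apply: le_trans _ (le_trans hA _).
      by rewrite le_eqVlt; apply/orP; left; apply/eqP; ring.
    by rewrite le_eqVlt; apply/orP; left; apply/eqP; ring.
  have E2 : \sum_i (9 * M ^+ 2) * T i
      = 9 * M ^+ 2 * (SS R n hv + SS R n hv + SS R n hv + SS R n hv
          + SS R n d + SS R n d + SS R n d + SS R n d + SS R n v).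
    rewrite -mulr_sumr /T !big_split /=.
    rewrite (@sum_S R n (fun j => Normc.normc (hv j 0) ^+ 2)) (@sum_P R n (fun j => Normc.normc (hv j 0) ^+ 2)).
    rewrite (@sum_S R n (fun j => Normc.normc (d (ordS j) 0) ^+ 2)) (@sum_S R n (fun j => Normc.normc (d j 0) ^+ 2)).
    rewrite (@sum_P R n (fun j => Normc.normc (d j 0) ^+ 2)).
    by rewrite (@sum_P R n (fun j => Normc.normc (v (ord_pred j) 0) ^+ 2)) (@sum_P R n (fun j => Normc.normc (v j 0) ^+ 2)).
  have Dd' := ler_wpM2l M2 Dd.
  have := mulr_ge0 M2 Sv; have := mulr_ge0 M2 Sh.
  rewrite -/d -/hv in Dd'.
  lra.
Qed.
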